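(* Let $\mathcal{X}\subseteq\mathbb{R}^d$, $\mathcal{Y}=\{-1,+1\}$, and let $p(\bm{x},y)$ be a joint distribution on $\mathcal{X}\times\mathcal{Y}$ with $\pi_+=p(y=+1)\in(0,1)$, $\pi_-=1-\pi_+$, $\pi_+\neq 1/2$, and class-conditional densities $p_\pm(\bm{x})=p(\bm{x}\mid y=\pm1)$. Let $\ell:\mathbb{R}\times\mathcal{Y}\to[0,\infty)$ be a loss and $R(g)=\mathbb{E}_{p(\bm{x},y)}[\ell(g(\bm{x}),y)]$ for $g:\mathcal{X}\to\mathbb{R}$. Let $\widehat{R}_{\mathrm{SD}}(g)$ and $\widehat{R}_{\mathrm{PC}}(g)$ be the estimators defined in the context below (computed from data distributed as described there). Then for every $\gamma\in[0,1]$ and every $g$ for which the expectations below are finite, $$\mathbb{E}\big[\gamma\,\widehat{R}_{\mathrm{SD}}(g)+(1-\gamma)\,\widehat{R}_{\mathrm{PC}}(g)\big]=R(g),$$ i.e. $\widehat{R}_{\mathrm{SD\text{-}PC\text{-}Convex}}(g):=\gamma\widehat{R}_{\mathrm{SD}}(g)+(1-\gamma)\widehat{R}_{\mathrm{PC}}(g)$ is an unbiased estimator of the classification risk $R(g)$.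
   Context: Similarity/dissimilarity (SD) data: two labeled examples $(\bm{x},y),(\bm{x}',y')$ drawn independently from $p(\bm x,y)$ form a similar pair if $y=y'$ and a dissimilar pair otherwise. Put $\pi_{\mathrm S}=\pi_+^2+\pi_-^2$, $\pi_{\mathrm D}=2\pi_+\pi_-$, and $p_{\mathrm S}(\bm{x},\bm{x}')=\frac{\pi_+^2}{\pi_{\mathrm S}}p_+(\bm{x})p_+(\bm{x}')+\frac{\pi_-^2}{\pi_{\mathrm S}}p_-(\bm{x})p_-(\bm{x}')$, $p_{\mathrm D}(\bm{x},\bm{x}')=\frac12p_+(\bm{x})p_-(\bm{x}')+\frac12p_-(\bm{x})p_+(\bm{x}')$. Let $\{(\bm{x}_{\mathrm S,i},\bm{x}'_{\mathrm S,i})\}_{i=1}^{n_{\mathrm S}}$ be i.i.d. from $p_{\mathrm S}$ and $\{(\bm{x}_{\mathrm D,i},\bm{x}'_{\mathrm D,i})\}_{i=1}^{n_{\mathrm D}}$ i.i.d. from $p_{\mathrm D}$. With $\mathcal{L}(z,t):=\frac{\pi_+}{\pi_+-\pi_-}\ell(z,t)-\frac{\pi_-}{\pi_+-\pi_-}\ell(z,-t)$, $\widehat{R}_{\mathrm{SD}}(g)=\frac{\pi_{\mathrm S}}{n_{\mathrm S}}\sum_{i=1}^{n_{\mathrm S}}\frac{\mathcal{L}(g(\bm{x}_{\mathrm S,i}),+1)+\mathcal{L}(g(\bm{x}'_{\mathrm S,i}),+1)}{2}+\frac{\pi_{\mathrm D}}{n_{\mathrm D}}\sum_{i=1}^{n_{\mathrm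 D}}\frac{\mathcal{L}(g(\bm{x}_{\mathrm D,i}),-1)+\mathcal{L}(g(\bm{x}'_{\mathrm D,i}),-1)}{2}$. Pairwise comparison (Pcomp) data: define the densities $\widetilde{p}_+(\bm{x})=\frac{\pi_+}{\pi_-^2+\pi_+}p_+(\bm{x})+\frac{\pi_-^2}{\pi_-^2+\pi_+}p_-(\bm{x})$ and $\widetilde{p}_-(\bm{x})=\frac{\pi_+^2}{\pi_+^2+\pi_-}p_+(\bm{x})+\frac{\pi_-}{\pi_+^2+\pi_-}p_-(\bm{x})$ (the marginal distributions of the instance judged more likely, respectively less likely, to be positive in a pairwise comparison). Let $\{(\bm{x}_i,\bm{x}'_i)\}_{i=1}^n$ be i.i.d. pairs with $\bm{x}_i\sim\widetilde p_+$ and $\bm{x}'_i\sim\widetilde p_-$, and $\widehat{R}_{\mathrm{PC}}(g)=\frac1n\sum_{i=1}^n\big(\ell(g(\bm{x}_i),+1)-\pi_+\ell(g(\bm{x}_i),-1)+\ell(g(\bm{x}'_i),-1)-\pi_-\ell(g(\bm{x}'_i),+1)\big)$. *)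

(* Defs.v *)
From mathcomp Require Import all_boot all_order all_algebra.
From mathcomp Require Import all_classical all_reals all_analysis.
Set Implicit Arguments. Unset Strict Implicit. Unset Printing Implicit Defensive.
Import Order.TTheory GRing.Theory Num.Theory.
Local Open Scope classical_set_scope.
Local Open Scope ring_scope.

(* Labels: [true] stands for y = +1 and [false] for y = -1. *)

Section SDPC.
Variable R : realType.

Definition piS (pip : R) : R := pip ^+ 2 + (1 - pip) ^+ 2.
Definition piD (pip : R) : R := 2 * pip * (1 - pip).

Definition corr_loss (pip : R) (l : R -> bool -> R) (z : R) (t : bool) : R :=
  pip / (pip - (1 - pip)) * l z t - (1 - pip) / (pip - (1 - pip)) * l z (~~ t).

Variables (d : measure_display) (X : measurableType d).

Definition pS_meas (pip : R) (pP pN : {measure set X -> \bar R})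
    (B : set (X * X)) : \bar R :=
  ((pip ^+ 2 / piS pip)%:E * (pP \x pP)%E B
   + ((1 - pip) ^+ 2 / piS pip)%:E * (pN \x pN)%E B)%E.

Definition pD_meas (pP pN : {measure set X -> \bar R})
    (B : set (X * X)) : \bar R :=
  ((1 / 2 : R)%:E * (pP \x pN)%E B + (1 / 2 : R)%:E * (pN \x pP)%E B)%E.

Definition ptilde_pos (pip : R) (pP pN : {measure set X -> \bar R})
    (A : set X) : \bar R :=
  ((pip / ((1 - pip) ^+ 2 + pip))%:E * pP A
   + ((1 - pip) ^+ 2 / ((1 - pip) ^+ 2 + pip))%:E * pN A)%E.

Definition ptilde_neg (pip : R) (pP pN : {measure set X -> \bar R})
    (A : set X) : \bar R :=
  ((pip ^+ 2 / (pip ^+ 2 + (1 - pip)))%:E * pP A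
   + ((1 - pip) / (pip ^+ 2 + (1 - pip)))%:E * pN A)%E.

Definition R_SD (pip : R) (l : R -> bool -> R) (g : X -> R) (nS nD : nat)
    (xS xS' : 'I_nS -> X) (xD xD' : 'I_nD -> X) : R :=
  piS pip / nS%:R * \sum_(i < nS)
      (corr_loss pip l (g (xS i)) true + corr_loss pip l (g (xS' i)) true) / 2
  + piD pip / nD%:R * \sum_(i < nD)
      (corr_loss pip l (g (xD i)) false + corr_loss pip l (g (xD' i)) false) / 2.

Definition R_PC (pip : R) (l : R -> bool -> R) (g : X -> R) (n : nat)
    (x x' : 'I_n -> X) : R :=
  1 / n%:R * \sum_(i < n)
    (l (g (x i)) true - pip * l (g (x i)) false
     + l (g (x' i)) false - (1 - pip) * l (g (x' i)) true).

End SDPC.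

(* Mutual independence of a finite family of random elements Z i : Omega -> T:
   the product rule for every choice of measurable events (taking [A i = setT]
   recovers the rule for every subfamily). *)
Definition mutually_independent (R : realType) (dO : measure_display)
    (Omega : measurableType dO) (dT : measure_display) (T : measurableType dT)
    (P : probability Omega R) (I : finType) (Z : I -> Omega -> T) : Prop :=
  forall A : I -> set T, (forall i, measurable (A i)) ->
    P (\bigcap_(i in [set: I]) (Z i @^-1` A i)) =
    (\prod_(i : I) P (Z i @^-1` A i))%E.

Definition all_pairs (dO : measure_display) (Omega : measurableType dO)
    (d : measure_display) (X : measurableType d) (nS nD n : nat)
    (xS xS' : 'I_nS -> Omega -> X) (xD xD' : 'I_nD -> Omega -> X)
    (x x' : 'I_n -> Omega -> X) : ('I_nS + 'I_nD + 'I_n)%type -> Omega -> (X * X)%type :=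
  fun k w => match k with
             | inl (inl i) => (xS i w, xS' i w)
             | inl (inr i) => (xD i w, xD' i w)
             | inr i => (x i w, x' i w)
             end.

(* Main.v *)
Require Import Defs.
From mathcomp Require Import all_boot all_order all_algebra.
From mathcomp Require Import all_classical all_reals all_analysis.
From mathcomp Require Import measurable_realfun.
From mathcomp Require Import ring lra.
Import Order.TTheory GRing.Theory Num.Theory.
Local Open Scope classical_set_scope.
Local Open Scope ring_scope.

Section Good.
Context (R : realType) (dO : measure_display) (Omega : measurableType dO) (P : probability Omega R).

Definition good (h : Omega -> R) (v : R) :=
  P.-integrable setT (fun w => (h w)%:E) /\ (\int[P]_w (h w)%:E = v%:E)%E.

Arguments good : clear implicits.
Lemma good_add h1 h2 v1 v2 : good h1 v1 -> good h2 v2 ->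
  good (fun w => h1 w + h2 w) (v1 + v2).
Proof.
move=> [i1 e1] [i2 e2]; rewrite /good.
have -> : (fun w => (h1 w + h2 w)%:E) = ((fun w => (h1 w)%:E) \+ (fun w => (h2 w)%:E))%E.
  by apply/funext => w; rewrite EFinD.
split; first exact: integrableD.
by rewrite integralD_EFin // e1 e2 -EFinD.
Qed.

Lemma good_scale c h v : good h v -> good (fun w => c * h w) (c * v).
Proof.
move=> [i e]; rewrite /good.
have -> : (fun w => (c * h w)%:E) = (fun w => c%:E * (h w)%:E)%E.
  by apply/funext => w; rewrite EFinM.
split; first exact: integrableZl.
by rewrite integralZl // e -EFinM.
Qed.

Lemma good_mulr c h v : good h v -> good (fun w => h w * c) (v * c).
Proof.
move=> /(good_scale c).
have -> : (fun w => c * h w) = (fun w => h w * c) by apply/funext => w; rewrite mulrC.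
by rewrite mulrC.
Qed.

Lemma good_opp h v : good h v -> good (fun w => - h w) (- v).
Proof.
move=> /(good_scale (-1)).
have -> : (fun w => -1 * h w) = (fun w => - h w) by apply/funext => w; rewrite mulN1r.
by rewrite mulN1r.
Qed.

Lemma good0 : good (fun _ => 0) 0.
Proof.
split; first exact: integrable0.
exact: integral0.
Qed.

Lemma good_sum (I : Type) (s : seq I) (h : I -> Omega -> R) (v : I -> R) :
  (forall i, good (h i) (v i)) ->
  good (fun w => \sum_(i <- s) h i w) (\sum_(i <- s) v i).
Proof.
move=> hg; elim: s => [|i s ih].
  have -> : (fun w => \sum_(i <- [::]) h i w) = (fun _ => 0) by apply/funext => w; rewrite big_nil.
  by rewrite big_nil; exact: good0.
have -> : (fun w => \sum_(j <- i :: s) h j w) = (fun w => h i w + \sum_(j <- s) h j w).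
  by apply/funext => w; rewrite big_cons.
by rewrite big_cons; apply: good_add.
Qed.

Lemma good_eqv h v v' : good h v -> v = v' -> good h v'.
Proof. by move=> ? <-. Qed.

End Good.
Arguments good {R dO Omega} P h v.
Lemma good_sum_const (R : realType) (dO : measure_display) (Omega : measurableType dO) (P : probability Omega R) (k : nat) (h : 'I_k -> Omega -> R) (c : R) :
  (forall i, good P (h i) c) ->
  good P (fun w => \sum_(i < k) h i w) (c * k%:R).
Proof.
move=> hg; have := @good_sum _ _ _ P _ (index_enum 'I_k) h (fun _ => c) hg.
have E : \sum_(i <- index_enum 'I_k) c = c * k%:R.
  by rewrite mulr_natr -[in RHS](card_ord k) -sumr_const.
by rewrite E.
Qed.



Section H.
Context (R : realType) (d : measure_display) (X : measurableType d) (dO: measure_display) (Omega : measurableType dO) (P : probability Omega R) (pP pN : probability X R).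
Lemma marg_int (Y : Omega -> X) (mY : measurable_fun setT Y) (a b : R) (ha : 0 <= a) (hb : 0 <= b)
  (hY : forall A, measurable A -> P (Y @^-1` A) = (a%:E * pP A + b%:E * pN A)%E)
  (f : X -> R) (mf : measurable_fun setT f) (f0 : forall x, 0 <= f x) :
  (\int[P]_w (f (Y w))%:E = a%:E * \int[pP]_x (f x)%:E + b%:E * \int[pN]_x (f x)%:E)%E.
Proof.
have mEf : measurable_fun setT (fun x => (f x)%:E) by exact/measurable_EFinP.
have -> : (\int[P]_w (f (Y w))%:E = \int[pushforward P Y]_x (f x)%:E)%E.
  rewrite (ge0_integral_pushforward mY) //=.
  by move=> y _; rewrite lee_fin.
rewrite (eq_measure_integral (measure_add (mscale (NngNum ha) pP) (mscale (NngNum hb) pN))); last first.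
  move=> A mA _; rewrite /= /measure_add /msum /= 2!big_ord_recl big_ord0 adde0 /mscale /= /pushforward hY //.
have f0' : forall x, [set: X] x -> (0 <= (f x)%:E)%E by move=> x _; rewrite lee_fin.
have H := ge0_integral_measure_add (mscale (NngNum ha) pP) (mscale (NngNum hb) pN) measurableT f0' mEf.
transitivity (\int[mscale (NngNum ha) pP]_x (f x)%:E + \int[mscale (NngNum hb) pN]_x (f x)%:E)%E; first exact H.
by rewrite !ge0_integral_mscale.
Qed.

Lemma marg_good (Y : Omega -> X) (mY : measurable_fun setT Y) (a b : R) (ha : 0 <= a) (hb : 0 <= b)
  (hY : forall A, measurable A -> P (Y @^-1` A) = (a%:E * pP A + b%:E * pN A)%E)
  (f : X -> R) (mf : measurable_fun setT f) (f0 : forall x, 0 <= f x)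
  (iP : pP.-integrable setT (fun x => (f x)%:E)) (iN : pN.-integrable setT (fun x => (f x)%:E)) :
  good P (fun w => f (Y w)) (a * fine (\int[pP]_x (f x)%:E)%E + b * fine (\int[pN]_x (f x)%:E)%E).
Proof.
have fP := integrable_fin_num measurableT iP.
have fN := integrable_fin_num measurableT iN.
split.
  apply/integrableP; split.
    by apply/measurable_EFinP; exact: measurableT_comp mf mY.
  under eq_integral => w _ do rewrite gee0_abs ?lee_fin //.
  by rewrite (marg_int _ mY _ _ ha hb hY _ mf f0) -(fineK fP) -(fineK fN) -!EFinM -EFinD ltry.
by rewrite (marg_int _ mY _ _ ha hb hY _ mf f0) -(fineK fP) -(fineK fN) -!EFinM -EFinD.
Qed.

Lemma mu_decomp (mu : probability (X * bool)%type R) (pip : R) (ha : 0 <= pip) (hb : 0 <= 1 - pip)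
  (hmuP : forall A : set X, measurable A ->
     mu (A `*` [set true]) = (pip%:E * pP A)%E)
  (hmuN : forall A : set X, measurable A ->
     mu (A `*` [set false]) = ((1 - pip)%:E * pN A)%E)
  (F : X -> bool -> R) (mF : forall t, measurable_fun setT (fun x => F x t))
  (F0 : forall x t, 0 <= F x t) :
  (\int[mu]_z (F z.1 z.2)%:E = pip%:E * \int[pP]_x (F x true)%:E + (1 - pip)%:E * \int[pN]_x (F x false)%:E)%E.
Proof.
have mh : measurable_fun setT (fun z : X * bool => (F z.1 z.2)%:E).
  apply/measurable_EFinP => _ A mA; rewrite setTI.
  have -> : (fun z : X * bool => F z.1 z.2) @^-1` A =
      ((fun x => F x true) @^-1` A `*` [set true]) `|` ((fun x => F x false) @^-1` A `*` [set false]).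
    apply/seteqP; split => [[x []]|[x b]] /=.
    - by move=> hA; left.
    - by move=> hA; right.
    - by move=> [[/= hA ->]|[/= hA ->]].
  apply: measurableU; apply: measurableX => //; rewrite -[X in measurable X]setTI.
    exact: (mF true).
  exact: (mF false).
have m1 := @pair2_measurable _ _ X bool true.
have m0 := @pair2_measurable _ _ X bool false.
rewrite (eq_measure_integral (measure_add (mscale (NngNum ha) (pushforward pP (pair^~ true)))
   (mscale (NngNum hb) (pushforward pN (pair^~ false))))); last first.
  move=> B mB _; rewrite /= /measure_add /msum /= 2!big_ord_recl big_ord0 adde0 /mscale /= /pushforward.
  rewrite /mscale /=.
  have mBt : measurable (pair^~ true @^-1` B) by rewrite -[X in measurable X]setTI; exact: m1.
  have mBf : measurable (pair^~ false @^-1` B) by rewrite -[X in measurable X]setTI; exact: m0.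
  have eB : B = ((pair^~ true @^-1` B) `*` [set true]) `|` ((pair^~ false @^-1` B) `*` [set false]).
    apply/seteqP; split => [[x []] hB|[x b] [[/= hB ->]|[/= hB ->]]] //=; [left|right]; done.
  rewrite {1}eB measureU //=; first by rewrite hmuP // hmuN.
  - exact: measurableX.
  - exact: measurableX.
  - apply/seteqP; split; last exact: sub0set.
    by move=> -[x b] /= [[_ ->] [_]].
have f0' : forall x, [set: X * bool] x -> (0 <= (F x.1 x.2)%:E)%E by move=> x _; rewrite lee_fin.
have H := ge0_integral_measure_add (mscale (NngNum ha) (pushforward pP (pair^~ true)))
   (mscale (NngNum hb) (pushforward pN (pair^~ false))) measurableT f0' mh.
etransitivity; first exact (H m1 m0).
rewrite !ge0_integral_mscale //.
rewrite (ge0_integral_pushforward m1) //; last by move=> y _; rewrite lee_fin.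
rewrite (ge0_integral_pushforward m0) //; last by move=> y _; rewrite lee_fin.
Qed.
End H.
Lemma prodX (R : realType) (d : measure_display) (X : measurableType d) (pA pB : probability X R) (A B : set X) :
  measurable A -> measurable B ->
  (((pA : {measure set X -> \bar R}) \x (pB : {measure set X -> \bar R})) (A `*` B) = pA A * pB B)%E.
Proof. by move=> mA mB; rewrite product_measure1E. Qed.

Arguments marg_good {R d X dO Omega P pP pN Y} mY {a b} ha hb hY {f} mf f0 iP iN.
Arguments mu_decomp {R d X pP pN mu pip} ha hb hmuP hmuN F mF F0.

Theorem theorem3p1
  (R : realType) (d : measure_display) (X : measurableType d)
  (* joint distribution p(x,y) on X * Y, with y = +1 encoded as [true] *)
  (mu : probability (X * bool)%type R)
  (pip : R) (pP pN : probability X R)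
  (hpi : 0 < pip < 1) (hpi_half : pip != 1 / 2)
  (hmuP : forall A : set X, measurable A ->
     mu (A `*` [set true]) = (pip%:E * pP A)%E)
  (hmuN : forall A : set X, measurable A ->
     mu (A `*` [set false]) = ((1 - pip)%:E * pN A)%E)
  (l : R -> bool -> R) (hl0 : forall z t, 0 <= l z t)
  (hl : forall t, measurable_fun [set: R] (fun z => l z t))
  (g : X -> R) (hg : measurable_fun [set: X] g)
  (hintP : forall t, pP.-integrable [set: X] (fun x => (l (g x) t)%:E))
  (hintN : forall t, pN.-integrable [set: X] (fun x => (l (g x) t)%:E))
  (dO : measure_display) (Omega : measurableType dO) (P : probability Omega R)
  (nS nD n : nat) (hnS : (0 < nS)%N) (hnD : (0 < nD)%N) (hn : (0 < n)%N)
  (xS xS' : 'I_nS -> Omega -> X) (xD xD' : 'I_nD -> Omega -> X)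
  (x x' : 'I_n -> Omega -> X)
  (mxS : forall i, measurable_fun [set: Omega] (xS i))
  (mxS' : forall i, measurable_fun [set: Omega] (xS' i))
  (mxD : forall i, measurable_fun [set: Omega] (xD i))
  (mxD' : forall i, measurable_fun [set: Omega] (xD' i))
  (mx : forall i, measurable_fun [set: Omega] (x i))
  (mx' : forall i, measurable_fun [set: Omega] (x' i))
  (hS : forall i (B : set (X * X)), measurable B ->
     P ((fun w => (xS i w, xS' i w)) @^-1` B) = pS_meas pip pP pN B)
  (hD : forall i (B : set (X * X)), measurable B ->
     P ((fun w => (xD i w, xD' i w)) @^-1` B) = pD_meas pP pN B)
  (hx : forall i (A : set X), measurable A ->
     P (x i @^-1` A) = ptilde_pos pip pP pN A)
  (hx' : forall i (A : set X), measurable A ->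
     P (x' i @^-1` A) = ptilde_neg pip pP pN A)
  (hind : mutually_independent P (all_pairs xS xS' xD xD' x x'))
  (gamma : R) (hgamma : 0 <= gamma <= 1) :
  (\int[P]_w
     (gamma * R_SD pip l g (fun i => xS i w) (fun i => xS' i w)
                           (fun i => xD i w) (fun i => xD' i w)
      + (1 - gamma) * R_PC pip l g (fun i => x i w) (fun i => x' i w))%:E
   = \int[mu]_z (l (g z.1) z.2)%:E)%E.
Proof.
move: hpi => /andP[p0 p1].
pose EP t := fine (\int[pP]_x (l (g x) t)%:E)%E.
pose EN t := fine (\int[pN]_x (l (g x) t)%:E)%E.
have mf t : measurable_fun setT (fun x => l (g x) t) := measurableT_comp (hl t) hg.
have f0 t x : 0 <= l (g x) t := hl0 _ _.
have q0 : 0 <= 1 - pip by lra.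
have sS : 0 < piS pip by rewrite /piS; nra.
have sT : 0 < (1 - pip) ^+ 2 + pip by nra.
have sU : 0 < pip ^+ 2 + (1 - pip) by nra.
have p0' := ltW p0.
have sS' := ltW sS. have sT' := ltW sT. have sU' := ltW sU.
have h2 : 0 <= 1 / 2 :> R by rewrite divr_ge0.
have atS i t : good P (fun w => l (g (xS i w)) t)
    (pip ^+ 2 / piS pip * EP t + (1 - pip) ^+ 2 / piS pip * EN t).
  apply: (marg_good (mxS i) _ _ _ (mf t) (f0 t) (hintP t) (hintN t)).
  - by apply: divr_ge0 => //; exact: sqr_ge0.
  - by apply: divr_ge0 => //; exact: sqr_ge0.
  move=> A mA.
  have -> : xS i @^-1` A = (fun w => (xS i w, xS' i w)) @^-1` (A `*` setT).
    by apply/seteqP; split => w /=; [move=> h; split|move=> []].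
  rewrite hS; last exact: measurableX.
  rewrite /pS_meas; congr (adde (mule _ _) (mule _ _)).
  - by rewrite -[RHS]mule1 -(probability_setT pP); exact: product_measure1E.
  - by rewrite -[RHS]mule1 -(probability_setT pN); exact: product_measure1E.
have atS' i t : good P (fun w => l (g (xS' i w)) t)
    (pip ^+ 2 / piS pip * EP t + (1 - pip) ^+ 2 / piS pip * EN t).
  apply: (marg_good (mxS' i) _ _ _ (mf t) (f0 t) (hintP t) (hintN t)).
  - by apply: divr_ge0 => //; exact: sqr_ge0.
  - by apply: divr_ge0 => //; exact: sqr_ge0.
  move=> A mA.
  have -> : xS' i @^-1` A = (fun w => (xS i w, xS' i w)) @^-1` (setT `*` A).
    by apply/seteqP; split => w /=; [move=> h; split|move=> []].
  rewrite hS; last exact: measurableX.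
  rewrite /pS_meas; congr (adde (mule _ _) (mule _ _)).
  - by rewrite -[RHS]mul1e -(probability_setT pP); exact: product_measure1E.
  - by rewrite -[RHS]mul1e -(probability_setT pN); exact: product_measure1E.
have atD i t : good P (fun w => l (g (xD i w)) t) (1 / 2 * EP t + 1 / 2 * EN t).
  apply: (marg_good (mxD i) h2 h2 _ (mf t) (f0 t) (hintP t) (hintN t)).
  move=> A mA.
  have -> : xD i @^-1` A = (fun w => (xD i w, xD' i w)) @^-1` (A `*` setT).
    by apply/seteqP; split => w /=; [move=> h; split|move=> []].
  rewrite hD; last exact: measurableX.
  rewrite /pD_meas; congr (adde (mule _ _) (mule _ _)).
  - by rewrite -[RHS]mule1 -(probability_setT pN); exact: product_measure1E.
  - by rewrite -[RHS]mule1 -(probability_setT pP); exact: product_measure1E.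
have atD' i t : good P (fun w => l (g (xD' i w)) t) (1 / 2 * EP t + 1 / 2 * EN t).
  apply: (marg_good (mxD' i) h2 h2 _ (mf t) (f0 t) (hintP t) (hintN t)).
  move=> A mA.
  have -> : xD' i @^-1` A = (fun w => (xD i w, xD' i w)) @^-1` (setT `*` A).
    by apply/seteqP; split => w /=; [move=> h; split|move=> []].
  rewrite hD; last exact: measurableX.
  rewrite /pD_meas addeC; congr (adde (mule _ _) (mule _ _)).
  - by rewrite -[RHS]mul1e -(probability_setT pN); exact: product_measure1E.
  - by rewrite -[RHS]mul1e -(probability_setT pP); exact: product_measure1E.
have atx i t : good P (fun w => l (g (x i w)) t)
    (pip / ((1 - pip) ^+ 2 + pip) * EP t + (1 - pip) ^+ 2 / ((1 - pip) ^+ 2 + pip) * EN t).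
  apply: (marg_good (mx i) _ _ _ (mf t) (f0 t) (hintP t) (hintN t)).
  - exact: divr_ge0.
  - by apply: divr_ge0 => //; exact: sqr_ge0.
  by move=> A mA; rewrite hx.
have atx' i t : good P (fun w => l (g (x' i w)) t)
    (pip ^+ 2 / (pip ^+ 2 + (1 - pip)) * EP t + (1 - pip) / (pip ^+ 2 + (1 - pip)) * EN t).
  apply: (marg_good (mx' i) _ _ _ (mf t) (f0 t) (hintP t) (hintN t)).
  - by apply: divr_ge0 => //; exact: sqr_ge0.
  - exact: divr_ge0.
  by move=> A mA; rewrite hx'.
have RHS : (\int[mu]_z (l (g z.1) z.2)%:E = (pip * EP true + (1 - pip) * EN false)%:E)%E.
  etransitivity; first exact: (mu_decomp p0' q0 hmuP hmuN (fun x t => l (g x) t) mf (fun x t => f0 t x)).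
  have eP : (\int[pP]_x (l (g x) true)%:E)%E = (EP true)%:E by rewrite fineK // integrable_fin_num.
  have eN : (\int[pN]_x (l (g x) false)%:E)%E = (EN false)%:E by rewrite fineK // integrable_fin_num.
  by rewrite /= eP eN -!EFinM -EFinD.
rewrite RHS.
have key : forall h v, good P h v -> (\int[P]_w (h w)%:E = v%:E)%E by move=> h v [].
apply: key.
eapply good_eqv.
  rewrite /R_SD /R_PC /corr_loss.
  repeat first [ apply: good_add | apply: good_opp | apply: good_sum_const => i | apply: atS | apply: atS' | apply: atD | apply: atD' | apply: atx | apply: atx' | apply: good_scale | apply: good_mulr ].
have n1 : nS%:R != 0 :> R by rewrite pnatr_eq0 -lt0n.
have n2 : nD%:R != 0 :> R by rewrite pnatr_eq0 -lt0n.
have n3 : n%:R != 0 :> R by rewrite pnatr_eq0 -lt0n.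
have hd : pip - (1 - pip) != 0.
  by apply: contra hpi_half => /eqP h; apply/eqP; lra.
have e1 : pip ^+ 2 + (1 - pip) ^+ 2 != 0 by move: sS; rewrite /piS => /gt_eqF ->.
have e2 : (1 - pip) ^+ 2 + pip != 0 by rewrite gt_eqF.
have e3 : pip ^+ 2 + (1 - pip) != 0 by rewrite gt_eqF.
rewrite /piS /piD /=.
field.
by rewrite e3 n3 hd n2 e1 n1.
Qed.
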